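(* For every positive integer $n$, $C_S(y^n x^n) = K[y^n x^n]$.
   Context: Standing conventions: $K$ is a field, $R = K[y]$, $\sigma$ is a $K$-algebra endomorphism of $R$ with $\deg_y(\sigma(y)) > 1$, and $\delta$ is a $K$-linear $\sigma$-derivation of $R$ ($\delta(ab) = \sigma(a)\delta(b) + \delta(a)b$). $S = R[x;\sigma,\delta]$ is the Ore extension (polynomials $\sum r_i x^i$, $r_i\in R$, with $xr = \sigma(r)x + \delta(r)$). $C_S(P)$ is the centralizer of $P$ in $S$, and $K[P] = \{\sum_i c_i P^i : c_i \in K\}$. *)

(* Defs.v *)
From HB Require Import structures.
From mathcomp Require Import all_boot all_order all_algebra.
Set Implicit Arguments. Unset Strict Implicit. Unset Printing Implicit Defensive.
Import GRing.Theory.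
Local Open Scope ring_scope.

(* R = K[y] is {poly K} (variable y = 'X).  Elements of the Ore extension
   S = R[x; sigma, delta] are represented by their (unique) left normal form
   sum_i r_i x^i, i.e. as elements of {poly {poly K}} (outer variable = x).
   The ring structure of {poly {poly K}} is NOT used for the Ore product,
   except for left multiplication by an element r%:P of R, which agrees with
   the Ore product r * (sum r_i x^i) = sum (r r_i) x^i. *)

Definition is_Kalg_endo (K : fieldType) (sigma : {poly K} -> {poly K}) : Prop :=
  [/\ forall a b, sigma (a + b) = sigma a + sigma b,
      forall a b, sigma (a * b) = sigma a * sigma b,
      sigma 1 = 1 &
      forall (c : K) a, sigma (c *: a) = c *: sigma a].

Definition is_Klin_sigma_deriv (K : fieldType) (sigma delta : {poly K} -> {poly K})
  : Prop :=
  [/\ forall a b, delta (a + b) = delta a + delta b,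
      forall (c : K) a, delta (c *: a) = c *: delta a &
      forall a b, delta (a * b) = sigma a * delta b + delta a * b].

(* left multiplication by x:  x * (r x^j) = sigma(r) x^(j+1) + delta(r) x^j *)
Definition ore_mulx (K : fieldType) (sigma delta : {poly K} -> {poly K})
  (g : {poly {poly K}}) : {poly {poly K}} :=
  \sum_(j < size g) ((sigma g`_j)%:P * 'X^(j.+1) + (delta g`_j)%:P * 'X^j).

Definition ore_mul (K : fieldType) (sigma delta : {poly K} -> {poly K})
  (f g : {poly {poly K}}) : {poly {poly K}} :=
  \sum_(i < size f) (f`_i)%:P * iter i (ore_mulx sigma delta) g.

Definition ore_pow (K : fieldType) (sigma delta : {poly K} -> {poly K})
  (P : {poly {poly K}}) (i : nat) : {poly {poly K}} :=
  iter i (ore_mul sigma delta P) 1.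

Definition centralizer (K : fieldType) (sigma delta : {poly K} -> {poly K})
  (P : {poly {poly K}}) : {poly {poly K}} -> Prop :=
  fun f => ore_mul sigma delta f P = ore_mul sigma delta P f.

Definition Kpoly_in (K : fieldType) (sigma delta : {poly K} -> {poly K})
  (P : {poly {poly K}}) : {poly {poly K}} -> Prop :=
  fun f => exists c : seq K,
    f = \sum_(i < size c) ore_mul sigma delta ((c`_i)%:P%:P) (ore_pow sigma delta P i).

(* Main.v *)
Require Import Defs.
From HB Require Import structures.
From mathcomp Require Import all_boot all_order all_algebra.
From mathcomp Require Import zify.
Set Implicit Arguments. Unset Strict Implicit. Unset Printing Implicit Defensive.
Import GRing.Theory.
Lemma two_exp (x : nat) : 2 * x <= 2 ^ x.
Proof. by case: x => // x; rewrite expnS leq_pmul2l // ltn_expl. Qed.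

Section NT.
Variables (N n d : nat).
Definition Ap a := n * d ^ a = n %[mod N].

Lemma A_sub a b : a <= b -> Ap a -> Ap b -> Ap (b - a).
Proof.
move=> ab Ha Hb; rewrite /Ap -Hb -{2}(subnKC ab) expnD mulnA.
by rewrite -(modnMml (n * d ^ a)) Ha modnMml.
Qed.

Lemma A_gcd s : forall a b, a + b <= s -> Ap a -> Ap b -> Ap (gcdn a b).
Proof.
elim: s => [|s IH] a b.
  by case: a => //; case: b.
move=> hs Ha Hb.
case: a Ha hs => [|a] Ha hs; first by rewrite gcd0n.
case: b Hb hs => [|b] Hb hs; first by rewrite gcdn0.
have [ab|ba] := leqP a b.
  have e : b.+1 = a.+1 + (b - a) by lia.
  rewrite e gcdnDl; apply: IH => //; first by lia.
  by have := @A_sub a.+1 b.+1 ab Ha Hb; rewrite e addKn.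
have e : a.+1 = b.+1 + (a - b) by lia.
rewrite gcdnC e gcdnDl; apply: IH => //; first by lia.
by have := @A_sub b.+1 a.+1 (ltnW ba) Hb Ha; rewrite e addKn.
Qed.
End NT.

Lemma nt d n m k : 1 < d -> 0 < n -> k + n * d ^ m = n + k * d ^ n -> n %| m.
Proof.
move=> d1 n0 E.
case: (n =P 1) => [->|n1]; first exact: dvd1n.
have n2 : 2 <= n by lia.
set N := d ^ n - 1.
have dn1 : 1 <= d ^ n by rewrite expn_gt0; lia.
have dnN : d ^ n = N + 1 by rewrite /N; lia.
have Am : Ap N n d m.
  have : n * d ^ m = k * N + n.
    rewrite /N mulnBr muln1; have : k <= k * d ^ n by rewrite leq_pmulr.
    lia.
  by rewrite /Ap => ->; rewrite modnMDl.
have Ashift : forall a q, Ap N n d (q * n + a) -> Ap N n d a.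
  move=> a; elim => [|q IH]; first by rewrite mul0n add0n.
  move=> H; apply: IH; move: H; rewrite /Ap mulSn -addnA expnD dnN.
  set x := d ^ _.
  have -> : n * ((N + 1) * x) = (n * x) * N + n * x by lia.
  by rewrite modnMDl.
have As : Ap N n d (m %% n) by apply: (Ashift _ (m %/ n)); rewrite -divn_eq.
have An : Ap N n d n by rewrite /Ap dnN mulnDr muln1 modnMDl.
set s := m %% n in As.
case: (s =P 0) => [s0|s0]; first by rewrite /dvdn; apply/eqP; exact: s0.
set g := gcdn s n.
have Ag : Ap N n d g by apply: (@A_gcd _ _ _ (s + n)).
have sn : s < n by rewrite ltn_pmod.
have g0 : 0 < g by rewrite gcdn_gt0; lia.
have gs : g <= s by apply: dvdn_leq; [lia | exact: dvdn_gcdl].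
have gn : g %| n by exact: dvdn_gcdr.
have g2 : 2 * g <= n.
  move: (gn) => /dvdnP [t ht]; rewrite ht; have : g < t * g by rewrite -ht; lia.
  case: t {ht} => [|[|t]] H; [by rewrite mul0n in H | by rewrite mul1n ltnn in H |].
  by rewrite leq_mul2r; apply/orP; right.
have dg2 : 2 <= d ^ g by rewrite (leq_trans _ (leq_pexp2l (m:=d) _ g0)) ?expn1; lia.
have hdiv : N %| n * d ^ g - n by rewrite -eqn_mod_dvd; [apply/eqP | rewrite leq_pmulr; lia].
have h2n : 2 * n <= n * d ^ g by rewrite mulnC leq_mul2l dg2 orbT.
have hle : N <= n * d ^ g - n by apply: dvdn_leq => //; lia.
have e1 : 2 ^ (n - g) <= d ^ (n - g) by rewrite leq_exp2r; lia.
have e2 : n <= 2 ^ (n - g) by apply: leq_trans (two_exp _); lia.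
have e3 : d ^ n = d ^ g * d ^ (n - g) by rewrite -expnD; congr (_ ^ _); lia.
have : d ^ g * n <= d ^ n by rewrite e3 leq_mul2l (leq_trans e2 e1) orbT.
rewrite /N mulnC in hle *; lia.
Qed.


Local Open Scope ring_scope.


Section Ore.
Variable K : fieldType.
Variables sigma delta : {poly K} -> {poly K}.
Hypothesis Hs : is_Kalg_endo sigma.
Hypothesis Hd : is_Klin_sigma_deriv sigma delta.
Hypothesis Hdeg : (2 < size (sigma 'X))%N.

Lemma sD a b : sigma (a + b) = sigma a + sigma b. Proof. by case: Hs. Qed.
Lemma sM a b : sigma (a * b) = sigma a * sigma b. Proof. by case: Hs. Qed.
Lemma s1 : sigma 1 = 1. Proof. by case: Hs. Qed.
Lemma sZ c a : sigma (c *: a) = c *: sigma a. Proof. by case: Hs. Qed.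
Lemma dD a b : delta (a + b) = delta a + delta b. Proof. by case: Hd. Qed.
Lemma dZ c a : delta (c *: a) = c *: delta a. Proof. by case: Hd. Qed.
Lemma dM a b : delta (a * b) = sigma a * delta b + delta a * b. Proof. by case: Hd. Qed.

Lemma dbl0 (V : zmodType) (x : V) : x = x + x -> x = 0.
Proof. move=> h; have: x + x - x = x - x by rewrite -h. by rewrite addrK subrr. Qed.
Lemma s0 : sigma 0 = 0.
Proof. by apply: dbl0; rewrite -sD addr0. Qed.
Lemma d0 : delta 0 = 0.
Proof. by apply: dbl0; rewrite -dD addr0. Qed.
Lemma sN a : sigma (- a) = - sigma a.
Proof. by apply/eqP; rewrite -subr_eq0 opprK -sD addNr s0. Qed.
Lemma dN a : delta (- a) = - delta a.
Proof. by apply/eqP; rewrite -subr_eq0 opprK -dD addNr d0. Qed.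
Lemma sC c : sigma c%:P = c%:P.
Proof. by rewrite -[c%:P]mulr1 mul_polyC sZ s1. Qed.
Lemma d1 : delta 1 = 0.
Proof. by apply: dbl0; have := dM 1 1; rewrite !mulr1 s1 mul1r. Qed.
Lemma dC c : delta c%:P = 0.
Proof. by rewrite -[c%:P]mulr1 mul_polyC dZ d1 scaler0. Qed.
Lemma s_sum I (r : seq I) (F : I -> {poly K}) :
  sigma (\sum_(i <- r) F i) = \sum_(i <- r) sigma (F i).
Proof. exact: (big_morph sigma sD s0). Qed.
Lemma sX i a : sigma (a ^+ i) = sigma a ^+ i.
Proof. by elim: i => [|i IH]; rewrite ?expr0 ?s1 // !exprS sM IH. Qed.

Lemma s_comp r : sigma r = r \Po sigma 'X.
Proof.
rewrite comp_polyE -{1}[r]coefK poly_def s_sum.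
by apply: eq_bigr => i _; rewrite sZ sX.
Qed.

Definition dd := (size (sigma 'X)).-1.
Lemma dd_gt1 : (1 < dd)%N.
Proof. by rewrite /dd; case: (size _) Hdeg => [|[|[|k]]]. Qed.

Lemma size_s r : (size (sigma r)).-1 = ((size r).-1 * dd)%N.
Proof. by rewrite s_comp size_comp_poly. Qed.

Lemma s_eq0 r : (sigma r == 0) = (r == 0).
Proof.
have [/size1_polyC->|H] := leqP (size r) 1; first by rewrite sC.
have := size_s r; rewrite -/dd => E.
have H1 : (0 < size (sigma r))%N.
  case: (size (sigma r)) E => [|k] //= E.
  by have := dd_gt1; move: E H; case: (size r) => [|[|m]] //=; case: dd.
rewrite -size_poly_eq0 -[r == 0]size_poly_eq0.
by case: (size _) H1 => //; case: (size r) H.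
Qed.

Lemma siter_eq0 i r : (iter i sigma r == 0) = (r == 0).
Proof. by elim: i => //= i IH; rewrite s_eq0 IH. Qed.

Lemma size_siter i r : (size (iter i sigma r)).-1 = ((size r).-1 * dd ^ i)%N.
Proof.
elim: i => [|i IH]; first by rewrite expn0 muln1.
by rewrite /= size_s IH expnS -mulnA (mulnC (dd ^ i)%N).
Qed.


Local Notation X := (ore_mulx sigma delta).
Local Notation mulO := (ore_mul sigma delta).

Lemma Xform (g : {poly {poly K}}) : X g = map_poly sigma g * 'X + map_poly delta g.
Proof.
rewrite /ore_mulx big_split /= /map_poly !poly_def mulr_suml.
congr (_ + _); apply: eq_bigr => j _; rewrite ?mul_polyC //.
by rewrite -!mul_polyC -mulrA -exprSr.
Qed.

Lemma coefX (g : {poly {poly K}}) k : (X g)`_k = (if k is k'.+1 then sigma g`_k' else 0) + delta g`_k.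
Proof.
by rewrite Xform coefD coefMX !coef_map_id0 ?s0 ?d0 //; case: k.
Qed.

Lemma XD (g h : {poly {poly K}}) : X (g + h) = X g + X h.
Proof.
apply/polyP => k; rewrite coefD !coefX !coefD dD.
case: k => [|k]; rewrite ?add0r // coefD sD; by rewrite addrACA.
Qed.

Lemma X0 : X 0 = 0.
Proof. by apply/polyP => k; rewrite coefX; case: k => [|k]; rewrite !coef0 ?s0 d0 addr0. Qed.

Lemma X_sum I (r : seq I) (F : I -> {poly {poly K}}) :
  X (\sum_(i <- r) F i) = \sum_(i <- r) X (F i).
Proof. exact: (big_morph X XD X0). Qed.

Lemma XiD i (g h : {poly {poly K}}) : iter i X (g + h) = iter i X g + iter i X h.
Proof. by elim: i => //= i IH; rewrite IH XD. Qed.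
Lemma Xi0 i : iter i X 0 = 0.
Proof. by elim: i => //= i ->; rewrite X0. Qed.

Lemma X_Leib (r : {poly K}) (u : {poly {poly K}}) : X (r%:P * u) = (sigma r)%:P * X u + (delta r)%:P * u.
Proof.
apply/polyP => k; rewrite coefD !coefCM !coefX.
case: k => [|k]; rewrite !coefCM dM ?mulr0 ?add0r ?mulrDr //.
by rewrite sM !addrA.
Qed.

Lemma XC (c : K) (u : {poly {poly K}}) : X (c%:P%:P * u) = c%:P%:P * X u.
Proof. by rewrite X_Leib sC dC polyC0 mul0r addr0. Qed.
Lemma XiC i (c : K) (u : {poly {poly K}}) : iter i X (c%:P%:P * u) = c%:P%:P * iter i X u.
Proof. by elim: i => //= i ->; rewrite XC. Qed.

Lemma mulO_wide (f g : {poly {poly K}}) N : (size f <= N)%N ->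
  mulO f g = \sum_(i < N) (f`_i)%:P * iter i X g.
Proof.
move=> H; rewrite /ore_mul (big_ord_widen N (fun i => (f`_i)%:P * iter i X g) H).
rewrite big_mkcond; apply: eq_bigr => i _; case: ltnP => // hi.
by rewrite nth_default // mul0r.
Qed.

Lemma mulODl (f1 f2 g : {poly {poly K}}) : mulO (f1 + f2) g = mulO f1 g + mulO f2 g.
Proof.
set N := maxn (size f1) (size f2).
have h1 : (size f1 <= N)%N by rewrite leq_maxl.
have h2 : (size f2 <= N)%N by rewrite leq_maxr.
have h3 : (size (f1 + f2)%R <= N)%N by rewrite (leq_trans (size_polyD _ _)).
rewrite (mulO_wide _ h1) (mulO_wide _ h2) (mulO_wide _ h3) -big_split.
by apply: eq_bigr => i _; rewrite coefD polyCD mulrDl.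
Qed.

Lemma mul0O (g : {poly {poly K}}) : mulO 0 g = 0.
Proof. by rewrite /ore_mul size_poly0 big_ord0. Qed.

Lemma mulO_suml I (r : seq I) (F : I -> {poly {poly K}}) g :
  mulO (\sum_(i <- r) F i) g = \sum_(i <- r) mulO (F i) g.
Proof. exact: (big_morph (fun f => mulO f g) (fun a b => mulODl a b g) (mul0O g)). Qed.

Lemma mulODr (f g1 g2 : {poly {poly K}}) : mulO f (g1 + g2) = mulO f g1 + mulO f g2.
Proof. by rewrite /ore_mul -big_split; apply: eq_bigr => i _; rewrite XiD mulrDr. Qed.

Lemma mulO0 (f : {poly {poly K}}) : mulO f 0 = 0.
Proof. by rewrite /ore_mul big1 // => i _; rewrite Xi0 mulr0. Qed.

Lemma mulO_sumr I (r : seq I) (F : I -> {poly {poly K}}) f :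
  mulO f (\sum_(i <- r) F i) = \sum_(i <- r) mulO f (F i).
Proof. exact: (big_morph (mulO f) (mulODr f) (mulO0 f)). Qed.

Lemma mulOCl (r : {poly K}) (f g : {poly {poly K}}) : mulO (r%:P * f) g = r%:P * mulO f g.
Proof.
have h : (size (r%:P * f)%R <= size f)%N.
  by rewrite mul_polyC size_scale_leq.
rewrite (mulO_wide _ h) /ore_mul mulr_sumr; apply: eq_bigr => i _.
by rewrite coefCM polyCM mulrA.
Qed.

Lemma X_Xn i : X 'X^i = 'X^(i.+1).
Proof.
have sb : forall b : bool, sigma b%:R = b%:R by case; rewrite ?s1 ?s0.
have db : forall b : bool, delta b%:R = 0 by case; rewrite ?d1 ?d0.
apply/polyP => k; rewrite coefX !coefXn db addr0.
by case: k => [|k] //; rewrite coefXn sb.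
Qed.

Lemma Xi_1 i : iter i X 1 = 'X^i.
Proof. by elim: i => //= i ->; rewrite X_Xn. Qed.

Lemma mulOCr (c : K) (f : {poly {poly K}}) : mulO f c%:P%:P = c%:P%:P * f.
Proof.
rewrite /ore_mul.
have Hc : forall i, iter i X c%:P%:P = c%:P%:P * 'X^i.
  by move=> i; rewrite -[c%:P%:P]mulr1 XiC Xi_1 mulr1.
rewrite -[in RHS](coefK f) poly_def mulr_sumr; apply: eq_bigr => i _.
by rewrite Hc -mul_polyC mulrCA.
Qed.

Lemma mulOC (c : K) (f : {poly {poly K}}) : mulO c%:P%:P f = c%:P%:P * f.
Proof.
rewrite /ore_mul size_polyC; case: eqP => [->|_]; last by rewrite big_ord1 coefC.
by rewrite big_ord0 !polyC0 mul0r.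
Qed.

Lemma X_mulO (g h : {poly {poly K}}) : X (mulO g h) = mulO (X g) h.
Proof.
rewrite {1}/ore_mul X_sum Xform mulODl.
have h1 : (size (map_poly delta g) <= size g)%N by rewrite size_poly.
have h2 : (size (map_poly sigma g * 'X)%R <= (size g).+1)%N.
  by rewrite (leq_trans (size_mul_leq _ _)) // size_polyX addn2 ltnS size_poly.
rewrite (mulO_wide _ h1) (mulO_wide _ h2) big_ord_recl /= coefMX /= polyC0 mul0r add0r.
rewrite -big_split /=; apply: eq_bigr => i _.
rewrite X_Leib coefMX /= !coef_map_id0 ?s0 ?d0 //.
Qed.

Lemma Xi_mulO i (g h : {poly {poly K}}) : iter i X (mulO g h) = mulO (iter i X g) h.
Proof. by elim: i => //= i ->; rewrite X_mulO. Qed.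

Lemma mulOA (f g h : {poly {poly K}}) : mulO f (mulO g h) = mulO (mulO f g) h.
Proof.
rewrite {2}/ore_mul mulO_suml /ore_mul; apply: eq_bigr => i _.
by rewrite Xi_mulO -mulOCl.
Qed.


Lemma sizeX (g : {poly {poly K}}) : g != 0 ->
  size (X g) = (size g).+1 /\ lead_coef (X g) = sigma (lead_coef g).
Proof.
move=> nz.
have hl : sigma (lead_coef g) != 0 by rewrite s_eq0 lead_coef_eq0.
have hs : size (map_poly sigma g) = size g by rewrite size_map_poly_id0.
have nzm : map_poly sigma g != 0 by rewrite -size_poly_eq0 hs size_poly_eq0.
have hlt : (size (map_poly delta g) < size (map_poly sigma g * 'X)%R)%N.
  by rewrite size_mulX // hs ltnS size_poly.
rewrite Xform size_polyDl // lead_coefDl // size_mulX // hs lead_coefMX.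
by rewrite lead_coef_map_id0 ?s0.
Qed.

Lemma sizeXi i (g : {poly {poly K}}) : g != 0 ->
  size (iter i X g) = (size g + i)%N /\ lead_coef (iter i X g) = iter i sigma (lead_coef g).
Proof.
move=> nz; elim: i => [|i [IH1 IH2]] /=; first by rewrite addn0.
have nz' : iter i X g != 0 by rewrite -size_poly_eq0 IH1 addn_eq0 size_poly_eq0 (negbTE nz).
by have [-> ->] := sizeX nz'; rewrite IH1 IH2 addnS.
Qed.

Lemma size_mulO (f g : {poly {poly K}}) : f != 0 -> g != 0 ->
  size (mulO f g) = (size g + (size f).-1)%N /\
  lead_coef (mulO f g) = lead_coef f * iter (size f).-1 sigma (lead_coef g).
Proof.
move=> nzf nzg; rewrite /ore_mul (polySpred nzf) big_ord_recr /= -/(lead_coef f).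
set m := (size f).-1.
have [Ts Tl] := sizeXi m nzg.
have lf : lead_coef f != 0 by rewrite lead_coef_eq0.
have hT : size ((lead_coef f)%:P * iter m X g) = (size g + m)%N by rewrite size_Cmul.
have hS : (size (\sum_(i < m) (f`_i)%:P * iter i X g)%R < size g + m)%N.
  have gp : (0 < size g)%N by rewrite size_poly_gt0.
  apply: (leq_ltn_trans (size_sum _ _ _)).
  apply: (@leq_ltn_trans (size g + m).-1); last by lia.
  apply/bigmax_leqP => i _.
  rewrite mul_polyC (leq_trans (size_scale_leq _ _)) //.
  have [-> _] := sizeXi i nzg.
  have := ltn_ord i; lia.
rewrite addrC size_polyDl hT // lead_coefDl ?hT //.
by rewrite lead_coefM lead_coefC Tl.
Qed.


Lemma mulOCr2 (c : K) (f g : {poly {poly K}}) :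
  mulO f (c%:P%:P * g) = c%:P%:P * mulO f g.
Proof.
rewrite /ore_mul mulr_sumr; apply: eq_bigr => i _.
by rewrite XiC mulrCA.
Qed.

Lemma mulO1 (f : {poly {poly K}}) : mulO f 1 = f.
Proof. by rewrite -polyC1 -polyC1 mulOCr polyC1 polyC1 mul1r. Qed.
Lemma mul1O (f : {poly {poly K}}) : mulO 1 f = f.
Proof. by rewrite -polyC1 -polyC1 mulOC polyC1 polyC1 mul1r. Qed.

Variable n : nat.
Hypothesis Hn : (0 < n)%N.
Local Notation P := (mulO ('X^n)%:P 'X^n).
Local Notation Pw := (ore_pow sigma delta P).

Lemma sizeP : size P = n.+1 /\ lead_coef P = 'X^n.
Proof.
have nz0 : ('X^n : {poly K}) != 0 by rewrite monic_neq0 ?monicXn.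
have nz1 : ('X^n : {poly K})%:P != 0 by rewrite polyC_eq0.
have nz2 : ('X^n : {poly {poly K}}) != 0 by rewrite monic_neq0 ?monicXn.
have [-> ->] := size_mulO nz1 nz2.
by rewrite size_polyC nz0 size_polyXn /= lead_coefC lead_coefXn addn0 mulr1.
Qed.

Lemma P_neq0 : P != 0.
Proof. by rewrite -size_poly_eq0 (proj1 sizeP). Qed.

Lemma sizePw q : size (Pw q) = (q * n).+1 /\ Pw q != 0.
Proof.
elim: q => [|q [IH1 IH2]]; first by rewrite /ore_pow /= size_poly1 oner_neq0.
have [h1 _] := size_mulO P_neq0 IH2.
have e : Pw q.+1 = mulO P (Pw q) by [].
rewrite e h1 IH1 (proj1 sizeP) /= mulSn; split; first by lia.
by rewrite -size_poly_eq0 h1 IH1.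
Qed.

Lemma Pw_comm q : mulO (Pw q) P = mulO P (Pw q).
Proof.
elim: q => [|q IH]; first by rewrite /ore_pow /= mul1O mulO1.
have e : Pw q.+1 = mulO P (Pw q) by [].
by rewrite e -mulOA IH.
Qed.

Lemma cent_deg (f : {poly {poly K}}) : f != 0 -> mulO f P = mulO P f ->
  ((size (lead_coef f)).-1 + n * dd ^ (size f).-1 = n + (size (lead_coef f)).-1 * dd ^ n)%N.
Proof.
move=> nzf E.
have [s1' l1] := size_mulO nzf P_neq0.
have [s2' l2] := size_mulO P_neq0 nzf.
have lf : lead_coef f != 0 by rewrite lead_coef_eq0.
have E2 : lead_coef (mulO f P) = lead_coef (mulO P f) by rewrite E.
rewrite l1 l2 (proj2 sizeP) (proj1 sizeP) /= in E2.
have := congr1 (fun p : {poly K} => (size p).-1) E2 => /=.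
have nzXn : ('X^n : {poly K}) != 0 by rewrite monic_neq0 ?monicXn.
rewrite !size_mul ?siter_eq0 //.
have h1 := size_siter (size f).-1 ('X^n : {poly K}).
have h2 := size_siter n (lead_coef f).
rewrite size_polyXn /= in h1.
have p1 : (0 < size (iter (size f).-1 sigma ('X^n : {poly K})))%N.
  by rewrite size_poly_gt0 siter_eq0.
have p2 : (0 < size (lead_coef f))%N by rewrite size_poly_gt0.
have p3 : (0 < size (iter n sigma (lead_coef f)))%N by rewrite size_poly_gt0 siter_eq0.
rewrite size_polyXn.
move: h1 h2 p1 p2 p3.
set A := size (iter _ sigma _); set B := size (iter _ sigma _); set C := size (lead_coef f).
move=> h1 h2 p1 p2 p3; lia.
Qed.

Lemma uniq_k k1 k2 A D : (1 < D)%N -> (k1 + A = n + k1 * D)%N -> (k2 + A = n + k2 * D)%N -> k1 = k2.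
Proof.
move=> D1.
have key : forall a b, (a < b)%N -> (a + A = n + a * D)%N -> (b + A = n + b * D)%N -> False.
  move=> a b ab ea eb.
  have eb' : (b * D = a * D + (b - a) * D)%N by rewrite -mulnDl subnKC // ltnW.
  have : (2 * (b - a) <= (b - a) * D)%N by rewrite mulnC leq_mul2l D1 orbT.
  lia.
move=> e1 e2; case: (ltngtP k1 k2) => // h; exfalso.
  exact: (key _ _ h e1 e2).
exact: (key _ _ h e2 e1).
Qed.


Definition inK f := exists N (a : nat -> K),
  f = \sum_(i < N) mulO (a i)%:P%:P (Pw i).
Definition cent f := mulO f P = mulO P f.

Lemma cent_add f q c : cent f -> cent (f + c%:P%:P * Pw q).
Proof.
rewrite /cent mulODl mulODr => ->; congr (_ + _).
by rewrite mulOCl mulOCr2 Pw_comm.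
Qed.

Lemma inK_add f q c : inK f -> inK (f + c%:P%:P * Pw q).
Proof.
move=> [N [a ->]].
exists (N + q.+1)%N, (fun i => (if (i < N)%N then a i else 0) + (if i == q then c else 0)).
have hq : (q < N + q.+1)%N by lia.
rewrite (eq_bigr (fun i : 'I_(N + q.+1) =>
   (if (i < N)%N then mulO (a i)%:P%:P (Pw i) else 0) +
   (if (i : nat) == q then c%:P%:P * Pw q else 0))); last first.
  move=> i _; rewrite mulOC !polyCD mulrDl; congr (_ + _).
    by case: ifP => _; rewrite ?mulOC // !polyC0 mul0r.
  by case: eqP => [->|_]; rewrite ?polyC0 ?mul0r.
rewrite big_split /=; congr (_ + _).
  by rewrite (big_ord_widen (N + q.+1) (fun i => mulO (a i)%:P%:P (Pw i))) ?leq_addr // big_mkcond.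
rewrite (bigD1 (Ordinal hq)) //= eqxx big1 ?addr0 // => i /negbTE hi.
case: eqP => // ei; move: hi; suff -> : i = Ordinal hq by rewrite eqxx.
by apply: val_inj.
Qed.

Lemma cent_inK s (f : {poly {poly K}}) : (size f <= s)%N -> cent f -> inK f.
Proof.
elim: s f => [|s IH] f.
  rewrite leqn0 size_poly_eq0 => /eqP -> _; exists 0%N, (fun _ => 0).
  by rewrite big_ord0.
move=> hs Cf.
have [->|nzf] := eqVneq f 0; first by exists 0%N, (fun _ => 0); rewrite big_ord0.
have Ef := cent_deg nzf Cf.
have /dvdnP [q hq] := nt dd_gt1 Hn Ef.
have [sPq nzPq] := sizePw q.
set Pq := Pw q in sPq nzPq.
have sfP : size f = size Pq by rewrite sPq -hq prednK // size_poly_gt0.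
have EPq := cent_deg nzPq (Pw_comm q).
rewrite -/Pq -sfP in EPq.
have Dn : (1 < dd ^ n)%N.
  by rewrite (leq_trans dd_gt1) // -{1}(expn1 dd) leq_pexp2l // ltnW // dd_gt1.
have kE := uniq_k Dn EPq Ef.
set L := lead_coef f in Ef kE.
set R := lead_coef Pq in EPq kE.
have nzL : L != 0 by rewrite lead_coef_eq0.
have nzR : R != 0 by rewrite lead_coef_eq0.
have lR : lead_coef R != 0 by rewrite lead_coef_eq0.
set c := lead_coef L / lead_coef R.
set g := f + (- c)%:P%:P * Pq.
have Cg : cent g by apply: cent_add.
have fg : f = g + c%:P%:P * Pq.
  by rewrite /g -addrA -mulrDl -!polyCD addNr !polyC0 mul0r addr0.
have sg : (size g <= size f)%N.
  rewrite (leq_trans (size_polyD _ _)) // geq_max leqnn /= mul_polyC.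
  by rewrite (leq_trans (size_scale_leq _ _)) // sfP.
have sg' : (size g < size f)%N.
  rewrite ltn_neqAle sg andbT; apply/negP => /eqP sge.
  have nzg : g != 0 by rewrite -size_poly_eq0 sge size_poly_eq0.
  have Eg := cent_deg nzg Cg.
  rewrite sge in Eg.
  have kg := uniq_k Dn Eg Ef.
  have lg : lead_coef g = L + (- c)%:P * R.
    by rewrite /L /R !lead_coefE sge -sfP coefD coefCM.
  have nzlg : lead_coef g != 0 by rewrite lead_coef_eq0.
  set k := (size L).-1 in kE kg.
  have sL : size L = k.+1 by rewrite /k prednK // size_poly_gt0.
  have sR : size R = k.+1 by rewrite -kE prednK // size_poly_gt0.
  have s1 : (size (lead_coef g) <= k.+1)%N.
    rewrite lg (leq_trans (size_polyD _ _)) // geq_max sL leqnn /= mul_polyC.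
    by rewrite (leq_trans (size_scale_leq _ _)) // sR.
  have s2 : size (lead_coef g) != k.+1.
    apply/negP => /eqP e.
    have : lead_coef (lead_coef g) = 0.
      rewrite lead_coefE e /= lg coefD coefCM.
      have -> : L`_k = lead_coef L by rewrite lead_coefE sL.
      have -> : R`_k = lead_coef R by rewrite lead_coefE sR.
      by rewrite /c mulNr divfK // subrr.
    by move/eqP; rewrite lead_coef_eq0 (negbTE nzlg).
  have s3 : (0 < size (lead_coef g))%N by rewrite size_poly_gt0.
  move: kg s1 s2 s3; set z := size (lead_coef g) => kg s1 s2 s3.
  lia.
rewrite fg; apply: inK_add; apply: IH => //.
by rewrite -ltnS (leq_trans sg' hs).
Qed.

End Ore.

Theorem corollary5p7 (K : fieldType) (sigma delta : {poly K} -> {poly K})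
  (Hsigma : is_Kalg_endo sigma)
  (Hdeg : (2 < size (sigma 'X))%N)
  (Hdelta : is_Klin_sigma_deriv sigma delta)
  (n : nat) (Hn : (0 < n)%N) :
  let P := ore_mul sigma delta (('X^n)%:P) 'X^n in
  forall f : {poly {poly K}},
    centralizer sigma delta P f <-> Kpoly_in sigma delta P f.
Proof.
move=> P f; split.
  move=> Cf.
  have [N [a E]] := @cent_inK K sigma delta Hsigma Hdelta Hdeg n Hn (size f) f (leqnn _) Cf.
  exists (mkseq a N); rewrite size_mkseq E; apply: eq_bigr => i _.
  by rewrite nth_mkseq.
move=> [c ->]; rewrite /centralizer mulO_suml (mulO_sumr Hsigma Hdelta); apply: eq_bigr => i _.
rewrite !mulOC mulOCl (mulOCr2 Hsigma Hdelta).
by rewrite (Pw_comm Hsigma Hdelta).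
Qed.
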